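(* Let $d\ge1$ and let $\mu=\prod_{i=1}^d\mu_i$ be a product probability measure on $\mathbb{R}^d$, where for each $i$, $\mathrm{d}\mu_i(x_i)=\rho_i(|x_i|)\,\mathrm{d}x_i$ is a probability measure on $\mathbb{R}$ with $\rho_i:[0,\infty)\to(0,\infty)$ continuous. Let $a_1,\dots,a_d>0$ and $B=\{x\in\mathbb{R}^d: \sum_{i=1}^d x_i^2/a_i^2\le1\}$. Then for every $f\in\bar{\mathcal{C}}_d$, $$\int_{\mathbb{R}^d} f\,\mathbf{1}_B\,\mathrm{d}\mu\ \ge\ \Big(\int_{\mathbb{R}^d} f\,\mathrm{d}\mu\Big)\,\mu(B).$$
   Context: $\mathcal{C}_1$ denotes the set of continuous compactly supported functions $g:\mathbb{R}\to[0,\infty)$ such that for every $c>0$ the set $\{t: g(t)>c\}$ is convex (an interval), and $g(t)\le g(0)$ for all $t\in\mathbb{R}$. $\bar{\mathcal{C}}_d$ denotes the set of continuous compactly supported functions $f:\mathbb{R}^d\to[0,\infty)$ such that for every $i\in\{1,\dots,d\}$ and every fixed choice of the other coordinates $(x_1,\dots,x_{i-1},x_{i+1},\dots,x_d)\in\mathbb{R}^{d-1}$, the one-variable function $x_i\mapsto f(x_1,\dots,x_{i-1},x_i,x_{i+1},\dots,x_d)$ belongs to $\mathcal{C}_1$. *)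

(* Defs.v *)
From Stdlib Require Import Reals Lra Classical ClassicalEpsilon.
Open Scope R_scope.

(* Value of the 1-D Riemann integral of g on [a,b] (when g is Riemann
   integrable there; arbitrary otherwise). *)
Definition RI (g : R -> R) (a b : R) : R :=
  epsilon (inhabits 0)
    (fun v => exists pr : Riemann_integrable g a b, RiemannInt pr = v).

Definition improper_int_R (g : R -> R) (l : R) : Prop :=
  forall eps, 0 < eps -> exists M, forall L, M <= L ->
    Rabs (RI g (- L) L - l) < eps.

(* Points of R^d are represented as x : nat -> R, only x 0, ..., x (d-1)
   being relevant. *)
Definition upd (x : nat -> R) (k : nat) (t : R) : nat -> R :=
  fun j => if Nat.eqb j k then t else x j.

Fixpoint sumR (d : nat) (g : nat -> R) : R :=
  match d with O => 0 | S k => sumR k g + g k end.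
Fixpoint prodR (d : nat) (g : nat -> R) : R :=
  match d with O => 1 | S k => prodR k g * g k end.

Fixpoint box_int (L : R) (k : nat) (F : (nat -> R) -> R) (x : nat -> R) : R :=
  match k with
  | O => F x
  | S j => RI (fun t => box_int L j F (upd x j t)) (- L) L
  end.

(* Integral over R^d (Lebesgue measure), as the limit of integrals over the
   cubes [-L,L]^d as L -> oo. *)
Definition int_Rd_is (d : nat) (F : (nat -> R) -> R) (I : R) : Prop :=
  forall eps, 0 < eps -> exists M, forall L, M <= L ->
    Rabs (box_int L d F (fun _ => 0) - I) < eps.

Definition int_Rd (d : nat) (F : (nat -> R) -> R) : R :=
  epsilon (inhabits 0) (int_Rd_is d F).

Definition class_C1 (g : R -> R) : Prop :=
  continuity g /\
  (exists K, forall t, K < Rabs t -> g t = 0) /\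
  (forall t, 0 <= g t) /\
  (forall c, 0 < c -> forall s t u, s <= t <= u -> c < g s -> c < g u -> c < g t) /\
  (forall t, g t <= g 0).

Definition continuous_Rd (d : nat) (f : (nat -> R) -> R) : Prop :=
  forall x eps, 0 < eps -> exists delta, 0 < delta /\
    forall y, (forall i, (i < d)%nat -> Rabs (y i - x i) < delta) ->
      Rabs (f y - f x) < eps.

Definition class_barCd (d : nat) (f : (nat -> R) -> R) : Prop :=
  continuous_Rd d f /\
  (exists K, forall x, (exists i, (i < d)%nat /\ K < Rabs (x i)) -> f x = 0) /\
  (forall x, 0 <= f x) /\
  (forall i x, (i < d)%nat -> class_C1 (fun t => f (upd x i t))).

(* rho : [0,oo) -> (0,oo) continuous (values outside [0,oo) irrelevant). *)
Definition pos_cont_on_halfline (rho : R -> R) : Prop :=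
  (forall r, 0 <= r -> 0 < rho r) /\
  (forall r eps, 0 <= r -> 0 < eps -> exists delta, 0 < delta /\
     forall s, 0 <= s -> Rabs (s - r) < delta -> Rabs (rho s - rho r) < eps).

Definition density (d : nat) (rho : nat -> R -> R) (x : nat -> R) : R :=
  prodR d (fun i => rho i (Rabs (x i))).

Definition ind_B (d : nat) (a : nat -> R) (x : nat -> R) : R :=
  if Rle_dec (sumR d (fun i => x i ^ 2 / a i ^ 2)) 1 then 1 else 0.

(* Main.v *)
Require Import Defs.
From Stdlib Require Import Reals Lra Lia Psatz FunctionalExtensionality ClassicalEpsilon Classical.
From Coquelicot Require Import Coquelicot.
Open Scope R_scope.
Notation exI g a b := (@ex_RInt R_CompleteNormedModule g a b).

Lemma RI_RInt g a b : exI g a b -> RI g a b = RInt g a b.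
Proof.
  intros H. unfold RI.
  destruct (epsilon_spec (inhabits 0) (fun v => exists pr : Riemann_integrable g a b, RiemannInt pr = v)) as [pr Hpr].
  - exists (RiemannInt (ex_RInt_Reals_0 g a b H)). exists (ex_RInt_Reals_0 g a b H). reflexivity.
  - rewrite <- Hpr. symmetry. apply RInt_Reals.
Qed.

Lemma ex_cont g a b : (forall t, continuous g t) -> exI g a b.
Proof. intros H. apply ex_RInt_continuous. intros; apply H. Qed.

Lemma RInt_ChaslesR g a b c : exI g a b -> exI g b c -> RInt g a b + RInt g b c = RInt g a c.
Proof. intros. apply (RInt_Chasles g a b c); auto. Qed.

Lemma RInt_scalR g a b l : exI g a b -> RInt (fun t => l * g t) a b = l * RInt g a b.
Proof. intros. apply (RInt_scal g a b l); auto. Qed.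

Lemma RInt_plusR g h a b : exI g a b -> exI h a b -> RInt (fun t => g t + h t) a b = RInt g a b + RInt h a b.
Proof. intros. apply (RInt_plus g h a b); auto. Qed.

Lemma RInt_minusR g h a b : exI g a b -> exI h a b -> RInt (fun t => g t - h t) a b = RInt g a b - RInt h a b.
Proof. intros. apply (RInt_minus g h a b); auto. Qed.

Lemma RInt_constR a b c : RInt (fun _ => c) a b = (b - a) * c.
Proof. apply (RInt_const a b c). Qed.

Lemma RInt_swapR g a b : exI g a b -> RInt g b a = - RInt g a b.
Proof. intros. rewrite <- (opp_RInt_swap g a b); auto. Qed.

Lemma cont_ed f x : (forall eps, 0 < eps -> exists del, 0 < del /\ forall y, Rabs (y - x) < del -> Rabs (f y - f x) < eps) -> continuous f x.
Proof.
  intros H. apply filterlim_locally. intros eps.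
  destruct (H eps (cond_pos eps)) as [del [Hd Hy]].
  exists (mkposreal del Hd). intros y Hb. apply Hy. exact Hb.
Qed.

Lemma ed_cpt f x : (forall eps, 0 < eps -> exists del, 0 < del /\ forall y, Rabs (y - x) < del -> Rabs (f y - f x) < eps) -> continuity_pt f x.
Proof.
  intros H eps He. destruct (H eps He) as [del [Hd Hy]]. exists del. split; auto.
  intros y [_ Hy']. apply Hy. exact Hy'.
Qed.

Lemma cpt_ed f x : continuity_pt f x -> forall eps, 0 < eps -> exists del, 0 < del /\ forall y, Rabs (y - x) < del -> Rabs (f y - f x) < eps.
Proof.
  intros H eps He. destruct (H eps He) as [del [Hd Hy]]. exists del. split; auto.
  intros y Hy'. destruct (Req_dec y x) as [->|Hne].
  - rewrite Rminus_diag, Rabs_R0. lra.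
  - apply (Hy y). split; [split; [exact I| auto]| exact Hy'].
Qed.

Lemma abs_RInt_gen (f : R -> R) u v M : exI f u v -> (forall t, Rmin u v <= t <= Rmax u v -> Rabs (f t) <= M) -> Rabs (RInt f u v) <= Rabs (v - u) * M.
Proof.
  intros He Hb. destruct (Rle_dec u v) as [Huv|Huv].
  - rewrite (Rabs_right (v - u)) by lra. apply abs_RInt_le_const; auto.
    intros t Ht. apply Hb. rewrite Rmin_left, Rmax_right; lra.
  - assert (He' : ex_RInt f v u) by (apply ex_RInt_swap; auto).
    rewrite (RInt_swapR f v u He'). rewrite Rabs_Ropp. rewrite (Rabs_left (v - u)) by lra.
    replace (- (v - u)) with (u - v) by ring. apply abs_RInt_le_const; auto; try lra.
    intros t Ht. apply Hb. rewrite Rmin_right, Rmax_left; lra.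
Qed.

Lemma upd_eq x k t : upd x k t k = t.
Proof. unfold upd. rewrite Nat.eqb_refl. reflexivity. Qed.
Lemma upd_neq x k t j : j <> k -> upd x k t j = x j.
Proof. intros H. unfold upd. destruct (Nat.eqb_spec j k); [lia|reflexivity]. Qed.

Lemma box_ext L k : forall F F' x x',
  (forall y y', (forall j, (j < k)%nat -> y j = y' j) -> (forall j, (k <= j)%nat -> y j = x j) ->
     (forall j, (k <= j)%nat -> y' j = x' j) -> F y = F' y') ->
  box_int L k F x = box_int L k F' x'.
Proof.
  induction k as [|k IH]; intros F F' x x' H; simpl.
  - apply H; intros; try lia; reflexivity.
  - f_equal. apply functional_extensionality. intros t. apply IH.
    intros y y' H1 H2 H3. apply H.
    + intros j Hj. destruct (Nat.eq_dec j k) as [->|Hn].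
      * rewrite (H2 k), (H3 k) by lia. rewrite !upd_eq. reflexivity.
      * apply H1; lia.
    + intros j Hj. rewrite H2 by lia. apply upd_neq; lia.
    + intros j Hj. rewrite H3 by lia. apply upd_neq; lia.
Qed.

Lemma ex_const a b c : exI (fun _ => c) a b.
Proof. apply ex_cont. intros; apply continuous_const. Qed.

Lemma RI_zero a b : RI (fun _ => 0) a b = 0.
Proof. rewrite RI_RInt by apply ex_const. rewrite RInt_constR. ring. Qed.

Lemma box_zero L k x : box_int L k (fun _ => 0) x = 0.
Proof.
  revert x; induction k as [|k IH]; intros x; simpl; auto.
  replace (fun t => box_int L k (fun _ => 0) (upd x k t)) with (fun _ : R => 0).
  - apply RI_zero.
  - apply functional_extensionality; intros; rewrite IH; reflexivity.
Qed.

Lemma sumR_ext k g g' : (forall i, (i < k)%nat -> g i = g' i) -> sumR k g = sumR k g'.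
Proof. induction k; simpl; intros H; auto. rewrite IHk by (intros; apply H; lia). rewrite H by lia. reflexivity. Qed.
Lemma prodR_ext k g g' : (forall i, (i < k)%nat -> g i = g' i) -> prodR k g = prodR k g'.
Proof. induction k; simpl; intros H; auto. rewrite IHk by (intros; apply H; lia). rewrite H by lia. reflexivity. Qed.

Definition indE (c : nat -> R) (r : R) (k : nat) (y : nat -> R) : R :=
  if Rle_dec (sumR k (fun i => c i * y i ^ 2)) r then 1 else 0.

Definition A (L : R) (c : nat -> R) (G : (nat -> R) -> R) (k : nat) (r : R) (x : nat -> R) : R :=
  box_int L k (fun y => G y * indE c r k y) x.

Definition cpos (d : nat) (c : nat -> R) := forall i, (i < d)%nat -> 0 <= c i.

Lemma sumR_nonneg k c y : cpos k c -> 0 <= sumR k (fun i => c i * y i ^ 2).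
Proof.
  induction k; simpl; intros H; [lra|].
  assert (0 <= c k) by (apply H; lia). assert (0 <= y k ^ 2) by (apply pow2_ge_0).
  assert (0 <= sumR k (fun i => c i * y i ^ 2)) by (apply IHk; intros i Hi; apply H; lia).
  apply Rplus_le_le_0_compat; auto; apply Rmult_le_pos; auto.
Qed.

Lemma A_neg L c G k r x : cpos k c -> r < 0 -> A L c G k r x = 0.
Proof.
  intros Hc Hr. unfold A. rewrite <- (box_zero L k x). apply box_ext.
  intros y y' _ _ _. unfold indE. destruct Rle_dec as [h|h]; [|ring].
  pose proof (sumR_nonneg k c y Hc). lra.
Qed.

Lemma A_S L c G k r x : A L c G (S k) r x = RI (fun t => A L c G k (r - c k * t ^ 2) (upd x k t)) (- L) L.
Proof.
  unfold A. simpl. f_equal. apply functional_extensionality; intros t.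
  apply box_ext. intros y y' H1 H2 H3.
  assert (Hyy : y = y').
  { apply functional_extensionality; intros j. destruct (Nat.lt_ge_cases j k); [apply H1; lia|].
    rewrite H2, H3 by lia. reflexivity. }
  subst y'. f_equal. unfold indE. simpl.
  rewrite (H2 k) by lia. rewrite upd_eq.
  do 2 destruct Rle_dec; auto; lra.
Qed.

Lemma piece (g h : R -> R) s L : 0 <= s <= L -> (forall t, -s <= t <= s -> g t = h t) ->
  (forall t, s < Rabs t <= L -> g t = 0) -> (forall t, continuous h t) ->
  exI g (-L) L /\ RI g (-L) L = RInt h (-s) s.
Proof.
  intros Hs Hgh Hg0 Hc.
  assert (E1 : exI g (-L) (-s)).
  { apply (ex_RInt_ext (fun _ => 0)); [|apply ex_const].
    intros t Ht. rewrite Rmin_left in Ht by lra. rewrite Rmax_right in Ht by lra.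
    symmetry; apply Hg0. rewrite Rabs_left by lra. lra. }
  assert (E2 : exI g (-s) s).
  { apply (ex_RInt_ext h); [|apply ex_cont; auto].
    intros t Ht. rewrite Rmin_left in Ht by lra. rewrite Rmax_right in Ht by lra.
    symmetry; apply Hgh. lra. }
  assert (E3 : exI g s L).
  { apply (ex_RInt_ext (fun _ => 0)); [|apply ex_const].
    intros t Ht. rewrite Rmin_left in Ht by lra. rewrite Rmax_right in Ht by lra.
    symmetry; apply Hg0. rewrite Rabs_right by lra. lra. }
  assert (E : exI g (-L) L) by (apply (ex_RInt_Chasles g _ s); auto; apply (ex_RInt_Chasles g _ (-s)); auto).
  split; auto. rewrite RI_RInt by auto.
  rewrite <- (RInt_ChaslesR g (-L) s L) by (auto; apply (ex_RInt_Chasles g _ (-s)); auto).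
  rewrite <- (RInt_ChaslesR g (-L) (-s) s) by auto.
  rewrite (RInt_ext g (fun _ => 0) (-L) (-s)).
  2:{ intros t Ht. rewrite Rmin_left in Ht by lra. rewrite Rmax_right in Ht by lra.
      apply Hg0. rewrite Rabs_left by lra. lra. }
  rewrite (RInt_ext g (fun _ => 0) s L).
  2:{ intros t Ht. rewrite Rmin_left in Ht by lra. rewrite Rmax_right in Ht by lra.
      apply Hg0. rewrite Rabs_right by lra. lra. }
  rewrite (RInt_ext g h (-s) s).
  2:{ intros t Ht. rewrite Rmin_left in Ht by lra. rewrite Rmax_right in Ht by lra. apply Hgh; lra. }
  rewrite !RInt_constR. ring.
Qed.

Definition near (d : nat) (x x0 : nat -> R) (del : R) := forall i, (i < d)%nat -> Rabs (x i - x0 i) < del.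

Definition contA (d : nat) (F : R -> (nat -> R) -> R) := forall r0 x0 eps, 0 <= r0 -> 0 < eps ->
  exists del, 0 < del /\ forall r x, 0 <= r -> Rabs (r - r0) < del -> near d x x0 del -> Rabs (F r x - F r0 x0) < eps.

Definition contH (d : nat) (H : R -> R -> (nat -> R) -> R) := forall t0 r0 x0 eps, 0 <= r0 -> 0 < eps ->
  exists del, 0 < del /\ forall t r x, 0 <= r -> Rabs (t - t0) < del -> Rabs (r - r0) < del -> near d x x0 del ->
     Rabs (H t r x - H t0 r0 x0) < eps.

Lemma near_refl d x del : 0 < del -> near d x x del.
Proof. intros h i _. rewrite Rminus_diag, Rabs_R0. exact h. Qed.
Lemma near_mono d x x0 a b : a <= b -> near d x x0 a -> near d x x0 b.
Proof. intros h H i Hi. specialize (H i Hi). lra. Qed.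

Lemma tube d H a b r0 x0 eps : contH d H -> a <= b -> 0 <= r0 -> 0 < eps ->
  exists del, 0 < del /\ forall t r x, a <= t <= b -> 0 <= r -> Rabs (r - r0) < del -> near d x x0 del ->
    Rabs (H t r x - H t r0 x0) < eps.
Proof.
  intros Hc Hab Hr0 He.
  assert (X : forall t, {dl : posreal | forall t' r x, 0 <= r -> Rabs (t' - t) < dl -> Rabs (r - r0) < dl ->
      near d x x0 dl -> Rabs (H t' r x - H t r0 x0) < eps / 2}).
  { intros t. apply constructive_indefinite_description.
    destruct (Hc t r0 x0 (eps/2) Hr0 ltac:(lra)) as [dl [Hdl Hp]].
    exists (mkposreal dl Hdl). exact Hp. }
  destruct (compactness_value_1d a b (fun t => proj1_sig (X t))) as [dd Hdd].
  exists dd. split; [apply cond_pos|].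
  intros t r x Ht Hr Hrr Hx. specialize (Hdd t Ht).
  apply NNPP; intro Hneg; apply Hdd; intros [t' [Ht' [H1 H2]]]. apply Hneg.
  destruct (X t') as [dl Hp]; simpl in *.
  assert (A1 := Hp t r x Hr H1 ltac:(lra) (near_mono d x x0 dd dl H2 Hx)).
  assert (A2 := Hp t r0 x0 Hr0 H1 ltac:(rewrite Rminus_diag, Rabs_R0; apply cond_pos) (near_refl d x0 dl (cond_pos dl))).
  replace (H t r x - H t r0 x0) with ((H t r x - H t' r0 x0) - (H t r0 x0 - H t' r0 x0)) by ring.
  eapply Rle_lt_trans; [apply Rabs_triang|]. rewrite Rabs_Ropp. lra.
Qed.

Lemma contH_t d H r x t0 : contH d H -> 0 <= r ->
  forall eps, 0 < eps -> exists del, 0 < del /\ forall t, Rabs (t - t0) < del -> Rabs (H t r x - H t0 r x) < eps.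
Proof.
  intros Hc Hr eps He. destruct (Hc t0 r x eps Hr He) as [del [Hd Hp]]. exists del; split; auto.
  intros t Ht. apply Hp; auto. rewrite Rminus_diag, Rabs_R0; auto. apply near_refl; auto.
Qed.

Lemma contH_cont d H r x t0 : contH d H -> 0 <= r -> continuous (fun t => H t r x) t0.
Proof. intros. apply cont_ed. apply (contH_t d); auto. Qed.

Lemma bnd d H a b r0 x0 : contH d H -> a <= b -> 0 <= r0 ->
  exists M, 0 <= M /\ forall t, a <= t <= b -> Rabs (H t r0 x0) <= M.
Proof.
  intros Hc Hab Hr.
  destruct (continuity_ab_maj (fun t => Rabs (H t r0 x0)) a b Hab) as [Mx [HM _]].
  { intros c _. apply ed_cpt. intros eps He. destruct (contH_t d H r0 x0 c Hc Hr eps He) as [dl [Hdl Hp]].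
    exists dl; split; auto. intros y Hy. eapply Rle_lt_trans; [apply Rabs_triang_inv2|]. apply Hp; auto. }
  exists (Rabs (H Mx r0 x0)). split; [apply Rabs_pos|]. exact HM.
Qed.

Lemma Rmin_lip L a b : Rabs (Rmin L a - Rmin L b) <= Rabs (a - b).
Proof. unfold Rmin. destruct (Rle_dec L a), (Rle_dec L b); split_Rabs; lra. Qed.

Definition sf (L c r : R) : R := if Rle_dec c 0 then L else Rmin L (sqrt (r / c)).

Lemma sf_bounds L c r : 0 <= L -> 0 <= sf L c r <= L.
Proof. intros HL. unfold sf. destruct Rle_dec; [lra|]. split; [apply Rmin_glb; auto; apply sqrt_pos| apply Rmin_l]. Qed.

Lemma sf_mono L c r1 r2 : r1 <= r2 -> sf L c r1 <= sf L c r2.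
Proof.
  intros H. unfold sf. destruct Rle_dec; [lra|]. unfold Rmin. do 2 destruct Rle_dec; try lra.
  - assert (sqrt (r1 / c) <= sqrt (r2 / c)) by (apply sqrt_le_1_alt; unfold Rdiv; apply Rmult_le_compat_r; [left; apply Rinv_0_lt_compat; lra| lra]). lra.
  - apply sqrt_le_1_alt; unfold Rdiv; apply Rmult_le_compat_r; [left; apply Rinv_0_lt_compat; lra| lra].
Qed.

Lemma sf_cont L c r0 eps : 0 <= r0 -> 0 < eps -> exists del, 0 < del /\ forall r, 0 <= r -> Rabs (r - r0) < del -> Rabs (sf L c r - sf L c r0) < eps.
Proof.
  intros Hr He. unfold sf. destruct Rle_dec.
  - exists 1. split; [lra|]. intros. rewrite Rminus_diag, Rabs_R0. lra.
  - assert (Hc : continuity_pt (fun r => sqrt (r / c)) r0).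
    { apply (continuity_pt_comp (fun r => r / c) sqrt).
      - apply continuity_pt_div; [apply continuity_pt_id | apply continuity_pt_const; intros a b; auto | lra].
      - apply continuity_pt_sqrt. unfold Rdiv. apply Rmult_le_pos; auto. left; apply Rinv_0_lt_compat; lra. }
    destruct (cpt_ed _ _ Hc eps He) as [dl [Hdl Hp]]. exists dl. split; auto.
    intros r _ Hrr. eapply Rle_lt_trans; [apply Rmin_lip|]. apply Hp; auto.
Qed.

Lemma sf_in L c r t : 0 <= c -> 0 <= r -> Rabs t <= sf L c r -> 0 <= r - c * t ^ 2.
Proof.
  intros Hc Hr Ht. unfold sf in Ht. destruct Rle_dec.
  - replace c with 0 by lra. lra.
  - assert (Ht2 : Rabs t <= sqrt (r / c)) by (eapply Rle_trans; [exact Ht| apply Rmin_r]).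
    assert (H2 : t ^ 2 <= r / c).
    { replace (t ^ 2) with (Rabs t * Rabs t) by (rewrite <- Rabs_mult; rewrite Rabs_right; [ring| nra]).
      rewrite <- (sqrt_sqrt (r / c)) by (unfold Rdiv; apply Rmult_le_pos; auto; left; apply Rinv_0_lt_compat; lra).
      apply Rmult_le_compat; auto; apply Rabs_pos. }
    assert (c * t ^ 2 <= c * (r / c)) by (apply Rmult_le_compat_l; lra).
    replace (c * (r / c)) with r in H by (field; lra). lra.
Qed.

Lemma sf_out L c r t : 0 <= c -> 0 <= r -> sf L c r < Rabs t <= L -> r - c * t ^ 2 < 0.
Proof.
  intros Hc Hr Ht. unfold sf in Ht. destruct Rle_dec; [lra|].
  assert (Hq : sqrt (r / c) < Rabs t).
  { unfold Rmin in Ht. destruct Rle_dec; lra. }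
  assert (H2 : r / c < t ^ 2).
  { replace (t ^ 2) with (Rabs t * Rabs t) by (rewrite <- Rabs_mult; rewrite Rabs_right; [ring| nra]).
    rewrite <- (sqrt_sqrt (r / c)) by (unfold Rdiv; apply Rmult_le_pos; auto; left; apply Rinv_0_lt_compat; lra).
    pose proof (sqrt_pos (r / c)). nra. }
  assert (c * (r / c) < c * t ^ 2) by (apply Rmult_lt_compat_l; lra).
  replace (c * (r / c)) with r in H by (field; lra). lra.
Qed.

Lemma GL d H s L : 0 <= L -> contH d H -> (forall r, 0 <= r -> 0 <= s r <= L) ->
  (forall r0 eps, 0 <= r0 -> 0 < eps -> exists del, 0 < del /\ forall r, 0 <= r -> Rabs (r - r0) < del -> Rabs (s r - s r0) < eps) ->
  contA d (fun r x => RInt (fun t => H t r x) (- s r) (s r)).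
Proof.
  intros HL Hc Hsb Hs r0 x0 eps Hr0 He.
  destruct (bnd d H (-L) L r0 x0 Hc ltac:(lra) Hr0) as [M [HM0 HM]].
  destruct (tube d H (-L) L r0 x0 (eps/(4*(L+1))) Hc ltac:(lra) Hr0) as [d1 [Hd1 Ht]].
  { apply Rdiv_lt_0_compat; lra. }
  destruct (Hs r0 (eps/(4*(M+1))) Hr0) as [d2 [Hd2 Hsp]].
  { apply Rdiv_lt_0_compat; lra. }
  exists (Rmin d1 d2). split; [apply Rmin_glb_lt; auto|].
  intros r x Hr Hrr Hx.
  assert (Hrr1 : Rabs (r - r0) < d1) by (eapply Rlt_le_trans; [exact Hrr| apply Rmin_l]).
  assert (Hrr2 : Rabs (r - r0) < d2) by (eapply Rlt_le_trans; [exact Hrr| apply Rmin_r]).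
  assert (Hx1 : near d x x0 d1) by (eapply near_mono; [apply Rmin_l| exact Hx]).
  pose proof (Hsb r Hr) as B1. pose proof (Hsb r0 Hr0) as B0.
  specialize (Hsp r Hr Hrr2).
  set (s1 := s r) in *. set (s0 := s r0) in *.
  assert (Ch : forall t, continuous (fun t => H t r x) t) by (intros; apply (contH_cont d); auto).
  assert (Ch0 : forall t, continuous (fun t => H t r0 x0) t) by (intros; apply (contH_cont d); auto).
  assert (E1 : RInt (fun t => H t r x) (- s1) s1 - RInt (fun t => H t r0 x0) (- s0) s0 =
     RInt (fun t => H t r x - H t r0 x0) (- s1) s1 +
     (RInt (fun t => H t r0 x0) (- s1) (- s0) + RInt (fun t => H t r0 x0) s0 s1)).
  { rewrite RInt_minusR by (apply ex_cont; auto).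
    rewrite <- (RInt_ChaslesR (fun t => H t r0 x0) (-s1) (-s0) s1) by (apply ex_cont; auto).
    rewrite <- (RInt_ChaslesR (fun t => H t r0 x0) (-s0) s0 s1) by (apply ex_cont; auto). ring. }
  rewrite E1.
  assert (T1 : Rabs (RInt (fun t => H t r x - H t r0 x0) (- s1) s1) <= (s1 - - s1) * (eps / (4 * (L + 1)))).
  { apply abs_RInt_le_const; [lra| apply ex_cont; intros; apply (continuous_minus (fun t => H t r x) (fun t => H t r0 x0)); auto|].
    intros t Htt. left. apply Ht; auto; lra. }
  assert (T2 : Rabs (RInt (fun t => H t r0 x0) (- s1) (- s0)) <= Rabs (- s0 - - s1) * M).
  { apply abs_RInt_gen; [apply ex_cont; auto|]. intros t Htt. apply HM.
    split; [eapply Rle_trans; [|apply Htt]; apply Rmin_glb; lra| eapply Rle_trans; [apply Htt|]; apply Rmax_lub; lra]. }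
  assert (T3 : Rabs (RInt (fun t => H t r0 x0) s0 s1) <= Rabs (s1 - s0) * M).
  { apply abs_RInt_gen; [apply ex_cont; auto|]. intros t Htt. apply HM.
    split; [eapply Rle_trans; [|apply Htt]; apply Rmin_glb; lra| eapply Rle_trans; [apply Htt|]; apply Rmax_lub; lra]. }
  replace (- s0 - - s1) with (s1 - s0) in T2 by ring.
  assert (Q1 : (s1 - - s1) * (eps / (4 * (L + 1))) < eps / 2).
  { apply (Rle_lt_trans _ (2 * L * (eps / (4 * (L + 1))))). apply Rmult_le_compat_r; [left; apply Rdiv_lt_0_compat; lra| lra].
    unfold Rdiv. rewrite <- Rmult_assoc. apply (Rmult_lt_reg_r (4 * (L + 1))); [lra|].
    rewrite Rmult_assoc, Rinv_l by lra. nra. }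
  assert (Q2 : Rabs (s1 - s0) * M <= eps / (4 * (M + 1)) * M) by (apply Rmult_le_compat_r; lra).
  assert (Q3 : eps / (4 * (M + 1)) * M < eps / 4).
  { unfold Rdiv. apply (Rmult_lt_reg_r (4 * (M + 1))); [lra|].
    replace (eps * / (4 * (M + 1)) * M * (4 * (M + 1))) with (eps * M * (/ (4 * (M + 1)) * (4 * (M + 1)))) by ring.
    rewrite Rinv_l by lra. nra. }
  eapply Rle_lt_trans; [apply Rabs_triang|].
  eapply Rle_lt_trans; [apply Rplus_le_compat_l; apply Rabs_triang|]. lra.
Qed.

Definition Hf L c G k (t r : R) (x : nat -> R) := A L c G k (Rmax (r - c k * t ^ 2) 0) (upd x k t).

Lemma Rmax_lip a b : Rabs (Rmax a 0 - Rmax b 0) <= Rabs (a - b).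
Proof. unfold Rmax. destruct (Rle_dec a 0), (Rle_dec b 0); split_Rabs; lra. Qed.

Lemma poly_cont c t0 r0 e : 0 < e -> exists del, 0 < del /\ forall t r, Rabs (t - t0) < del -> Rabs (r - r0) < del ->
  Rabs ((r - c * t ^ 2) - (r0 - c * t0 ^ 2)) < e.
Proof.
  intros He. set (K := 1 + Rabs c * (2 * Rabs t0 + 1)).
  assert (HK : 1 <= K) by (unfold K; pose proof (Rabs_pos c); pose proof (Rabs_pos t0); nra).
  exists (Rmin 1 (e / (2 * K))). split.
  { apply Rmin_glb_lt; [lra| apply Rdiv_lt_0_compat; lra]. }
  intros t r Ht Hr.
  assert (D1 : Rabs (t - t0) < 1) by (eapply Rlt_le_trans; [exact Ht| apply Rmin_l]).
  assert (D2 : Rabs (t - t0) < e / (2 * K)) by (eapply Rlt_le_trans; [exact Ht| apply Rmin_r]).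
  assert (D3 : Rabs (r - r0) < e / (2 * K)) by (eapply Rlt_le_trans; [exact Hr| apply Rmin_r]).
  replace ((r - c * t ^ 2) - (r0 - c * t0 ^ 2)) with ((r - r0) - c * ((t - t0) * (t + t0))) by ring.
  eapply Rle_lt_trans; [apply Rabs_triang|]. rewrite Rabs_Ropp, !Rabs_mult.
  assert (Tt : Rabs (t + t0) <= 2 * Rabs t0 + 1).
  { replace (t + t0) with ((t - t0) + 2 * t0) by ring. eapply Rle_trans; [apply Rabs_triang|].
    rewrite Rabs_mult, (Rabs_right 2) by lra. lra. }
  assert (Hc0 := Rabs_pos c). assert (Hd0 := Rabs_pos (t - t0)). assert (Hs0 := Rabs_pos (t + t0)).
  assert (Hm : Rabs c * (Rabs (t - t0) * Rabs (t + t0)) <= Rabs c * (2 * Rabs t0 + 1) * (e / (2 * K))).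
  { rewrite Rmult_assoc. apply Rmult_le_compat_l; auto.
    rewrite Rmult_comm. apply Rmult_le_compat; auto; lra. }
  assert (Hsum : e / (2 * K) + Rabs c * (2 * Rabs t0 + 1) * (e / (2 * K)) = e / 2).
  { unfold K. field. pose proof (Rabs_pos c); pose proof (Rabs_pos t0). nra. }
  lra.
Qed.

Lemma contA_0 L c G d : continuous_Rd d G -> contA d (A L c G 0).
Proof.
  intros HG r0 x0 eps Hr0 He. destruct (HG x0 eps He) as [del [Hd Hp]].
  exists del. split; auto. intros r x Hr _ Hx. unfold A; simpl. unfold indE; simpl.
  destruct (Rle_dec 0 r); [|lra]. destruct (Rle_dec 0 r0); [|lra].
  rewrite !Rmult_1_r. apply Hp. exact Hx.
Qed.

Lemma contH_of L c G d k : (k < d)%nat -> contA d (A L c G k) -> contH d (Hf L c G k).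
Proof.
  intros Hk HA t0 r0 x0 eps Hr0 He.
  destruct (HA (Rmax (r0 - c k * t0 ^ 2) 0) (upd x0 k t0) eps ltac:(apply Rmax_r) He) as [d1 [Hd1 Hp]].
  destruct (poly_cont (c k) t0 r0 d1 Hd1) as [d2 [Hd2 Hq]].
  exists (Rmin d1 d2). split; [apply Rmin_glb_lt; auto|].
  intros t r x Hr Ht Hrr Hx. unfold Hf. apply Hp.
  - apply Rmax_r.
  - eapply Rle_lt_trans; [apply Rmax_lip|]. apply Hq; (eapply Rlt_le_trans; [eassumption| apply Rmin_r]).
  - intros i Hi. unfold upd. destruct (Nat.eqb i k).
    + eapply Rlt_le_trans; [exact Ht| apply Rmin_l].
    + eapply Rlt_le_trans; [apply Hx; auto| apply Rmin_l].
Qed.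

Lemma contA_ext d F F' : (forall r x, 0 <= r -> F r x = F' r x) -> contA d F -> contA d F'.
Proof.
  intros E H r0 x0 eps Hr0 He. destruct (H r0 x0 eps Hr0 He) as [del [Hd Hp]].
  exists del; split; auto. intros r x Hr Hrr Hx. rewrite <- !E by auto. apply Hp; auto.
Qed.

Lemma cpos_S k c : cpos (S k) c -> cpos k c.
Proof. intros H i Hi. apply H. lia. Qed.

Lemma rep L c G d k r x : 0 <= L -> cpos (S k) c -> contH d (Hf L c G k) -> 0 <= r ->
  exI (fun t => A L c G k (r - c k * t ^ 2) (upd x k t)) (-L) L /\
  A L c G (S k) r x = RInt (fun t => Hf L c G k t r x) (- sf L (c k) r) (sf L (c k) r).
Proof.
  intros HL Hc HH Hr. rewrite A_S.
  assert (Hck : 0 <= c k) by (apply Hc; lia).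
  apply piece.
  - apply sf_bounds; auto.
  - intros t Ht. unfold Hf. f_equal. rewrite Rmax_left; auto.
    apply Rge_le, Rle_ge. pose proof (sf_in L (c k) r t Hck Hr ltac:(apply Rabs_le; lra)). lra.
  - intros t Ht. apply A_neg; [apply cpos_S; auto|]. apply (sf_out L); auto.
  - intros t. apply (contH_cont d); auto.
Qed.

Lemma reg L c G d : 0 <= L -> cpos d c -> continuous_Rd d G -> forall k, (k <= d)%nat -> contA d (A L c G k).
Proof.
  intros HL Hc HG. induction k as [|k IH]; intros Hk.
  - apply contA_0; auto.
  - assert (HH : contH d (Hf L c G k)) by (apply contH_of; [lia| apply IH; lia]).
    apply (contA_ext d (fun r x => RInt (fun t => Hf L c G k t r x) (- sf L (c k) r) (sf L (c k) r))).
    + intros r x Hr. symmetry. apply (rep L c G d k r x HL); auto. intros i Hi; apply Hc; lia.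
    + apply (GL d _ _ L); auto. intros; apply sf_bounds; auto. intros; apply sf_cont; auto.
Qed.

Section Props.
Variables (L : R) (d : nat).
Hypothesis HL : 0 <= L.

Lemma HH c G k : cpos d c -> continuous_Rd d G -> (k < d)%nat -> contH d (Hf L c G k).
Proof. intros. apply contH_of; auto. apply reg; auto. lia. Qed.

Lemma repS c G k r x : cpos d c -> continuous_Rd d G -> (S k <= d)%nat -> 0 <= r ->
  A L c G (S k) r x = RInt (fun t => Hf L c G k t r x) (- sf L (c k) r) (sf L (c k) r).
Proof.
  intros Hc HG Hk Hr. apply (rep L c G d k r x HL); auto.
  intros i Hi; apply Hc; lia. apply HH; auto.
Qed.

Lemma Hf_cont c G k r x t0 : cpos d c -> continuous_Rd d G -> (k < d)%nat -> 0 <= r -> continuous (fun t => Hf L c G k t r x) t0.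
Proof. intros. apply (contH_cont d); auto. apply HH; auto. Qed.

Lemma exHf c G k r x a b : cpos d c -> continuous_Rd d G -> (k < d)%nat -> 0 <= r -> exI (fun t => Hf L c G k t r x) a b.
Proof. intros. apply ex_cont. intros; apply Hf_cont; auto. Qed.

Lemma A_nonneg c G : cpos d c -> continuous_Rd d G -> (forall y, 0 <= G y) ->
  forall k, (k <= d)%nat -> forall r x, 0 <= A L c G k r x.
Proof.
  intros Hc HG Hp. induction k as [|k IH]; intros Hk r x.
  - unfold A; simpl. unfold indE. destruct Rle_dec; [rewrite Rmult_1_r; auto| lra].
  - destruct (Rlt_le_dec r 0) as [Hr|Hr].
    + rewrite A_neg; [lra| |auto]. intros i Hi; apply Hc; lia.
    + rewrite repS by auto. pose proof (sf_bounds L (c k) r HL).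
      apply RInt_ge_0; [lra| apply exHf; auto; try lia; lra|]. intros t _. unfold Hf. apply IH. lia.
Qed.

Lemma A_mono c G1 G2 : cpos d c -> continuous_Rd d G1 -> continuous_Rd d G2 -> (forall y, 0 <= G1 y) ->
  (forall y, G1 y <= G2 y) ->
  forall k, (k <= d)%nat -> forall r1 r2 x, r1 <= r2 -> A L c G1 k r1 x <= A L c G2 k r2 x.
Proof.
  intros Hc HG1 HG2 Hp Hle. induction k as [|k IH]; intros Hk r1 r2 x Hr.
  - unfold A; simpl. unfold indE. pose proof (Hp x); pose proof (Hle x).
    do 2 destruct Rle_dec; lra.
  - assert (Hp2 : forall y, 0 <= G2 y) by (intros y; pose proof (Hp y); pose proof (Hle y); lra).
    destruct (Rlt_le_dec r1 0) as [H1|H1].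
    + rewrite A_neg; [| |auto]. apply A_nonneg; auto. intros i Hi; apply Hc; lia.
    + rewrite !repS by (auto; lra).
      pose proof (sf_bounds L (c k) r1 HL). pose proof (sf_bounds L (c k) r2 HL).
      pose proof (sf_mono L (c k) r1 r2 Hr) as Hm.
      set (s1 := sf L (c k) r1) in *. set (s2 := sf L (c k) r2) in *.
      apply Rle_trans with (RInt (fun t => Hf L c G2 k t r2 x) (- s1) s1).
      * apply RInt_le; [lra| apply exHf; auto; try lia; lra| apply exHf; auto; try lia; lra|].
        intros t _. unfold Hf. apply IH; [lia|].
        assert (0 <= c k) by (apply Hc; lia).
        unfold Rmax. do 2 destruct Rle_dec; lra.
      *         rewrite <- (RInt_ChaslesR _ (-s2) (-s1) s2) by (apply exHf; auto; try lia; lra).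
        rewrite <- (RInt_ChaslesR _ (-s1) s1 s2) by (apply exHf; auto; try lia; lra).
        assert (0 <= RInt (fun t => Hf L c G2 k t r2 x) (- s2) (- s1)).
        { apply RInt_ge_0; [lra| apply exHf; auto; try lia; lra|]. intros; unfold Hf; apply A_nonneg; auto; lia. }
        assert (0 <= RInt (fun t => Hf L c G2 k t r2 x) s1 s2).
        { apply RInt_ge_0; [lra| apply exHf; auto; try lia; lra|]. intros; unfold Hf; apply A_nonneg; auto; lia. }
        lra.
Qed.

Definition dep_ge (k : nat) (b : (nat -> R) -> R) := forall y y', (forall j, (k <= j)%nat -> y j = y' j) -> b y = b y'.

Lemma A_scal c G b : cpos d c -> continuous_Rd d G -> continuous_Rd d (fun y => G y * b y) ->
  forall k, (k <= d)%nat -> dep_ge k b -> forall r x, A L c (fun y => G y * b y) k r x = A L c G k r x * b x.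
Proof.
  intros Hc HG HGb. induction k as [|k IH]; intros Hk Hb r x.
  - unfold A; simpl. ring.
  - destruct (Rlt_le_dec r 0) as [H1|H1].
    + assert (cpos (S k) c) by (intros i Hi; apply Hc; lia). rewrite !A_neg by auto. ring.
    + rewrite !repS by auto.
      rewrite (RInt_ext _ (fun t => b x * Hf L c G k t r x)).
      * rewrite RInt_scalR; [ring| apply exHf; auto; lia].
      * intros t _. unfold Hf. rewrite IH; [| lia|].
        -- replace (b (upd x k t)) with (b x); [apply Rmult_comm|]. apply Hb. intros j Hj. rewrite upd_neq; auto; lia.
        -- intros y y' Hy. apply Hb. intros j Hj. apply Hy. lia.
Qed.
End Props.

Lemma A_indep L c G k r x x' : (forall y y', (forall j, (j < k)%nat -> y j = y' j) -> G y = G y') ->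
  A L c G k r x = A L c G k r x'.
Proof.
  intros HG. unfold A. apply box_ext. intros y y' H1 _ _. rewrite (HG y y' H1). f_equal.
  unfold indE. rewrite (sumR_ext k (fun i => c i * y i ^ 2) (fun i => c i * y' i ^ 2)) by (intros i Hi; rewrite H1; auto).
  reflexivity.
Qed.

Lemma A_shift L c G k r x t t' : A L c G k r (upd x k t') = A L c (fun y => G (upd y k t')) k r (upd x k t).
Proof.
  unfold A. apply box_ext. intros y y' H1 H2 H3.
  assert (E : upd y' k t' = y).
  { apply functional_extensionality; intros j. destruct (Nat.lt_ge_cases j k) as [h|h].
    - rewrite upd_neq by lia. symmetry; apply H1; auto.
    - destruct (Nat.eq_dec j k) as [->|hn].
      + rewrite upd_eq, H2 by lia. rewrite upd_eq. reflexivity.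
      + rewrite upd_neq by lia. rewrite H2, H3 by lia. rewrite !upd_neq by lia. reflexivity. }
  rewrite E. f_equal. unfold indE.
  rewrite (sumR_ext k (fun i => c i * y i ^ 2) (fun i => c i * y' i ^ 2)) by (intros i Hi; rewrite H1; auto).
  reflexivity.
Qed.

Lemma A_zeroG L c G k r x : (forall y, (forall j, (k <= j)%nat -> y j = x j) -> G y = 0) -> A L c G k r x = 0.
Proof.
  intros HG. unfold A. rewrite <- (box_zero L k x). apply box_ext. intros y y' _ H2 _.
  rewrite HG by auto. ring.
Qed.

Lemma mult_cont_R a0 b0 e : 0 < e -> exists del, 0 < del /\ forall a b, Rabs (a - a0) < del -> Rabs (b - b0) < del ->
  Rabs (a * b - a0 * b0) < e.
Proof.
  intros He. set (K := Rabs a0 + Rabs b0 + 1).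
  assert (HK : 1 <= K) by (unfold K; pose proof (Rabs_pos a0); pose proof (Rabs_pos b0); lra).
  exists (Rmin 1 (e / (2 * K))). split; [apply Rmin_glb_lt; [lra| apply Rdiv_lt_0_compat; lra]|].
  intros a b Ha Hb.
  assert (D1 : Rabs (a - a0) <= 1) by (left; eapply Rlt_le_trans; [exact Ha| apply Rmin_l]).
  assert (D2 : Rabs (a - a0) <= e / (2 * K)) by (left; eapply Rlt_le_trans; [exact Ha| apply Rmin_r]).
  assert (D3 : Rabs (b - b0) <= e / (2 * K)) by (left; eapply Rlt_le_trans; [exact Hb| apply Rmin_r]).
  replace (a * b - a0 * b0) with ((a - a0) * (b - b0) + (a - a0) * b0 + a0 * (b - b0)) by ring.
  eapply Rle_lt_trans; [apply Rabs_triang|]. eapply Rle_lt_trans; [apply Rplus_le_compat_r; apply Rabs_triang|].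
  rewrite !Rabs_mult.
  pose proof (Rabs_pos (a - a0)); pose proof (Rabs_pos (b - b0)); pose proof (Rabs_pos a0); pose proof (Rabs_pos b0).
  assert (Hq : e / (2 * K) * K = e / 2) by (field; lra).
  assert (Rabs (a - a0) * Rabs (b - b0) <= 1 * (e / (2 * K))) by (apply Rmult_le_compat; auto).
  assert (Rabs (a - a0) * Rabs b0 <= e / (2 * K) * Rabs b0) by (apply Rmult_le_compat_r; auto).
  assert (Rabs a0 * Rabs (b - b0) <= Rabs a0 * (e / (2 * K))) by (apply Rmult_le_compat_l; auto).
  assert (e / (2 * K) * 1 + e / (2 * K) * Rabs b0 + Rabs a0 * (e / (2 * K)) = e / (2 * K) * K) by (unfold K; ring).
  nra.
Qed.

Lemma cd_mult d G1 G2 : continuous_Rd d G1 -> continuous_Rd d G2 -> continuous_Rd d (fun y => G1 y * G2 y).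
Proof.
  intros H1 H2 x eps He. destruct (mult_cont_R (G1 x) (G2 x) eps He) as [d0 [Hd0 Hm]].
  destruct (H1 x d0 Hd0) as [d1 [Hd1 P1]]. destruct (H2 x d0 Hd0) as [d2 [Hd2 P2]].
  exists (Rmin d1 d2). split; [apply Rmin_glb_lt; auto|]. intros y Hy. apply Hm.
  - apply P1. intros i Hi. eapply Rlt_le_trans; [apply Hy; auto| apply Rmin_l].
  - apply P2. intros i Hi. eapply Rlt_le_trans; [apply Hy; auto| apply Rmin_r].
Qed.

Lemma cd_const d a : continuous_Rd d (fun _ => a).
Proof. intros x eps He. exists 1. split; [lra|]. intros. rewrite Rminus_diag, Rabs_R0. lra. Qed.

Lemma cd_upd d G k t : continuous_Rd d G -> continuous_Rd d (fun y => G (upd y k t)).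
Proof.
  intros H x eps He. destruct (H (upd x k t) eps He) as [d0 [Hd0 P]]. exists d0. split; auto.
  intros y Hy. apply P. intros i Hi. unfold upd. destruct (Nat.eqb i k).
  - rewrite Rminus_diag, Rabs_R0; auto.
  - apply Hy; auto.
Qed.

Lemma cd_rho d rho i : (i < d)%nat -> pos_cont_on_halfline rho -> continuous_Rd d (fun y => rho (Rabs (y i))).
Proof.
  intros Hi [_ Hc] x eps He. destruct (Hc (Rabs (x i)) eps (Rabs_pos _) He) as [d0 [Hd0 P]].
  exists d0. split; auto. intros y Hy. apply P; [apply Rabs_pos|].
  eapply Rle_lt_trans; [apply Rabs_triang_inv2| apply Hy; auto].
Qed.

Definition dens (rho : nat -> R -> R) (k : nat) (y : nat -> R) := prodR k (fun i => rho i (Rabs (y i))).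

Lemma cd_dens d rho : (forall i, (i < d)%nat -> pos_cont_on_halfline (rho i)) -> forall k, (k <= d)%nat -> continuous_Rd d (dens rho k).
Proof.
  intros Hr. induction k as [|k IH]; intros Hk.
  - unfold dens; simpl. apply cd_const.
  - unfold dens; simpl. apply (cd_mult d (fun y => prodR k (fun i => rho i (Rabs (y i)))) (fun y => rho k (Rabs (y k)))).
    + apply IH; lia.
    + apply cd_rho; [lia| apply Hr; lia].
Qed.

Lemma dens_pos d rho : (forall i, (i < d)%nat -> pos_cont_on_halfline (rho i)) -> forall k, (k <= d)%nat -> forall y, 0 < dens rho k y.
Proof.
  intros Hr. induction k as [|k IH]; intros Hk y.
  - unfold dens; simpl. lra.
  - unfold dens; simpl. apply Rmult_lt_0_compat. apply IH; lia. apply (proj1 (Hr k ltac:(lia))). apply Rabs_pos.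
Qed.

Lemma RInt_cut (h : R -> R) K s : 0 <= K <= s -> (forall t, continuous h t) -> (forall t, K < Rabs t -> h t = 0) ->
  @eq R (RInt h (-s) s) (RInt h (-K) K).
Proof.
  intros Hs Hc Hz.
  rewrite <- (RInt_ChaslesR h (-s) (-K) s) by (apply ex_cont; auto).
  rewrite <- (RInt_ChaslesR h (-K) K s) by (apply ex_cont; auto).
  rewrite (RInt_ext h (fun _ => 0) (-s) (-K)).
  2:{ intros t Ht. rewrite Rmin_left in Ht by lra. rewrite Rmax_right in Ht by lra. apply Hz. rewrite Rabs_left by lra. lra. }
  rewrite (RInt_ext h (fun _ => 0) K s).
  2:{ intros t Ht. rewrite Rmin_left in Ht by lra. rewrite Rmax_right in Ht by lra. apply Hz. rewrite Rabs_right by lra. lra. }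
  rewrite !RInt_constR. ring.
Qed.

Lemma const_b d L L' c G K : 0 <= K -> K <= L -> K <= L' -> cpos d c -> continuous_Rd d G ->
  (forall y, (exists i, (i < d)%nat /\ K < Rabs (y i)) -> G y = 0) ->
  forall k, (k <= d)%nat -> forall r x, A L c G k r x = A L' c G k r x.
Proof.
  intros HK HL HL' Hc HG Hz. induction k as [|k IH]; intros Hk r x.
  - reflexivity.
  - destruct (Rlt_le_dec r 0) as [Hr|Hr].
    + assert (cpos (S k) c) by (intros i Hi; apply Hc; lia). rewrite !A_neg by auto. reflexivity.
    + rewrite (repS L d) by (auto; lra). rewrite (repS L' d) by (auto; lra).
      replace (fun t => Hf L c G k t r x) with (fun t => Hf L' c G k t r x)
        by (apply functional_extensionality; intros t; unfold Hf; symmetry; apply IH; lia).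
      assert (Hc0 : forall t, continuous (fun t => Hf L' c G k t r x) t) by (intros; apply (Hf_cont L' d); auto; lra).
      assert (Hz0 : forall t, K < Rabs t -> Hf L' c G k t r x = 0).
      { intros t Ht. unfold Hf. apply A_zeroG. intros y Hy. apply Hz. exists k. split; [lia|].
        rewrite Hy by lia. rewrite upd_eq. auto. }
      unfold sf. destruct Rle_dec.
      * rewrite (RInt_cut _ K L) by (auto; lra). rewrite (RInt_cut _ K L') by (auto; lra). reflexivity.
      * set (q := sqrt (r / c k)). destruct (Rle_dec q K).
        -- rewrite !Rmin_right by lra. reflexivity.
        -- assert (K <= Rmin L q) by (apply Rmin_glb; lra). assert (K <= Rmin L' q) by (apply Rmin_glb; lra).
           rewrite (RInt_cut _ K (Rmin L q)) by (auto; lra). rewrite (RInt_cut _ K (Rmin L' q)) by (auto; lra). reflexivity.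
Qed.

Lemma const_a d L L' c G : 0 <= L -> 0 <= L' -> (forall i, (i < d)%nat -> 0 < c i) ->
  (forall i r, (i < d)%nat -> 0 <= r <= 1 -> sqrt (r / c i) <= L /\ sqrt (r / c i) <= L') -> continuous_Rd d G ->
  forall k, (k <= d)%nat -> forall r x, r <= 1 -> A L c G k r x = A L' c G k r x.
Proof.
  intros HL HL' Hc Hq HG. assert (Hc' : cpos d c) by (intros i Hi; left; apply Hc; auto).
  induction k as [|k IH]; intros Hk r x Hr1.
  - reflexivity.
  - destruct (Rlt_le_dec r 0) as [Hr|Hr].
    + assert (cpos (S k) c) by (intros i Hi; apply Hc'; lia). rewrite !A_neg by auto. reflexivity.
    + rewrite (repS L d) by auto. rewrite (repS L' d) by auto.
      assert (Hck : 0 < c k) by (apply Hc; lia).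
      assert (E : sf L (c k) r = sf L' (c k) r).
      { destruct (Hq k r ltac:(lia) ltac:(lra)). unfold sf. destruct Rle_dec; [lra|]. rewrite !Rmin_right by lra. reflexivity. }
      rewrite E. apply RInt_ext. intros t _. unfold Hf. apply IH; [lia|].
      pose proof (pow2_ge_0 t). unfold Rmax. destruct Rle_dec; nra.
Qed.

Lemma rho_abs_cont rho t0 : pos_cont_on_halfline rho -> continuous (fun t => rho (Rabs t)) t0.
Proof.
  intros [_ Hc]. apply cont_ed. intros eps He. destruct (Hc (Rabs t0) eps (Rabs_pos _) He) as [dl [Hdl P]].
  exists dl. split; auto. intros y Hy. apply P; [apply Rabs_pos|].
  eapply Rle_lt_trans; [apply Rabs_triang_inv2| exact Hy].
Qed.

Lemma W_prod d L rho : 0 <= L -> (forall i, (i < d)%nat -> pos_cont_on_halfline (rho i)) ->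
  forall k, (k <= d)%nat -> forall x, A L (fun _ => 0) (dens rho k) k 1 x = prodR k (fun i => RInt (fun t => rho i (Rabs t)) (-L) L).
Proof.
  intros HL Hr. assert (Hz : cpos d (fun _ => 0)) by (intros i _; lra).
  induction k as [|k IH]; intros Hk x.
  - unfold A, dens, indE; simpl. destruct Rle_dec; lra.
  - assert (Hd : continuous_Rd d (dens rho (S k))) by (apply cd_dens; auto).
    rewrite (repS L d) by (auto; lra).
    unfold sf. destruct Rle_dec; [|lra]. simpl prodR.
    rewrite (RInt_ext _ (fun t => prodR k (fun i => RInt (fun t => rho i (Rabs t)) (-L) L) * rho k (Rabs t))).
    + rewrite RInt_scalR; [reflexivity|]. apply ex_cont. intros t. apply rho_abs_cont. apply Hr; lia.
    + intros t _. unfold Hf. replace (Rmax (1 - 0 * t ^ 2) 0) with 1 by (unfold Rmax; destruct Rle_dec; lra).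
      unfold dens at 1. simpl prodR.
      rewrite (A_scal L d HL (fun _ => 0) (dens rho k) (fun y => rho k (Rabs (y k))) Hz) by
        (try apply cd_dens; auto; try lia; try (apply (cd_mult d); [apply cd_dens; auto; lia| apply cd_rho; auto]);
         intros y y' Hy; rewrite Hy; auto).
      rewrite IH by lia. rewrite upd_eq. reflexivity.
Qed.

Lemma cmul (f g : R -> R) t : continuous f t -> continuous g t -> continuous (fun y => f y * g y) t.
Proof. intros. apply (continuous_mult f g); auto. Qed.
Lemma cplus (f g : R -> R) t : continuous f t -> continuous g t -> continuous (fun y => f y + g y) t.
Proof. intros. apply (continuous_plus f g); auto. Qed.
Lemma cconst (a t : R) : continuous (fun _ => a) t.
Proof. apply continuous_const. Qed.
Lemma copp (f : R -> R) t : continuous f (- t) -> continuous (fun y => f (- y)) t.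
Proof.
  intros H. apply (continuous_comp (fun y : R => - y) f); auto.
  apply (continuous_opp (fun y : R => y)). apply continuous_id.
Qed.

Lemma RInt_extR (f g : R -> R) a b : (forall x, @eq R (f x) (g x)) -> @eq R (RInt f a b) (RInt g a b).
Proof. intros H. apply RInt_ext. intros; apply H. Qed.

Lemma lin4 (f1 f2 f3 f4 : R -> R) a b c e u v :
  (forall t, continuous f1 t) -> (forall t, continuous f2 t) -> (forall t, continuous f3 t) -> (forall t, continuous f4 t) ->
  @eq R (RInt (fun t => a * f1 t + b * f2 t + c * f3 t + e * f4 t) u v)
    (a * RInt f1 u v + b * RInt f2 u v + c * RInt f3 u v + e * RInt f4 u v).
Proof.
  intros H1 H2 H3 H4.
  assert (X : forall (f : R -> R) k, (forall t, continuous f t) -> exI (fun t => k * f t) u v).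
  { intros f k Hf. apply ex_cont. intros t. apply cmul; auto. apply cconst. }
  assert (C : forall (f : R -> R) k t, (forall t, continuous f t) -> continuous (fun t => k * f t) t).
  { intros. apply cmul; auto. apply cconst. }
  rewrite RInt_plusR.
  2:{ apply ex_cont. intros t. apply cplus; [apply cplus|]; [apply C| apply C|apply C]; auto. }
  2:{ apply X; auto. }
  rewrite RInt_plusR.
  2:{ apply ex_cont. intros t. apply cplus; apply C; auto. }
  2:{ apply X; auto. }
  rewrite RInt_plusR by (apply X; auto).
  rewrite !RInt_scalR by (apply ex_cont; auto). reflexivity.
Qed.

Lemma refl (g : R -> R) a : (forall t, continuous g t) -> @eq R (RInt (fun t => g (- t)) (- a) a) (RInt g (- a) a).
Proof.
  intros Hg.
  assert (E := RInt_comp_lin g (-1) 0 (-a) a).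
  assert (E' : @eq R (RInt (fun y => -1 * g (-1 * y + 0)) (- a) a) (RInt g (-1 * - a + 0) (-1 * a + 0))).
  { apply E. apply ex_cont; auto. }
  replace (-1 * - a + 0) with a in E' by ring. replace (-1 * a + 0) with (- a) in E' by ring.
  rewrite (RInt_swapR g (-a) a) in E' by (apply ex_cont; auto).
  rewrite (RInt_extR _ (fun y => -1 * g (- y))) in E' by (intros; f_equal; f_equal; ring).
  rewrite RInt_scalR in E' by (apply ex_cont; intros t; apply copp; auto). lra.
Qed.

Lemma cheb_sym (w psi phi : R -> R) L s : 0 <= s <= L ->
  (forall t, continuous w t) -> (forall t, continuous psi t) -> (forall t, continuous phi t) -> (forall t, 0 <= w t) ->
  (forall t t', Rabs t <= Rabs t' <= L -> psi t' <= psi t) ->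
  (forall t t', Rabs t <= Rabs t' <= s -> phi t' <= phi t) -> (forall t, Rabs t <= s -> 0 <= phi t) ->
  RInt w (-L) L * RInt (fun t => psi t * phi t * w t) (-s) s >=
  RInt (fun t => psi t * w t) (-L) L * RInt (fun t => phi t * w t) (-s) s.
Proof.
  intros Hs Cw Cp Cf Hw Hpsi Hphi Hphi0.
  assert (Cpfw : forall t, continuous (fun t => psi t * phi t * w t) t) by (intros; repeat apply cmul; auto).
  assert (Cfw : forall t, continuous (fun t => phi t * w t) t) by (intros; repeat apply cmul; auto).
  assert (Cpw : forall t, continuous (fun t => psi t * w t) t) by (intros; repeat apply cmul; auto).
  assert (HO : 0 <= RInt w (-L) L) by (apply RInt_ge_0; [lra| apply ex_cont; auto| intros; auto]).
  set (Om := RInt w (-L) L) in *. set (Pi := RInt (fun t => psi t * phi t * w t) (-s) s).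
  set (Ps := RInt (fun t => psi t * w t) (-L) L). set (Ph := RInt (fun t => phi t * w t) (-s) s).
  set (Pb := fun t => if Rle_dec (Rabs t) s then phi t else 0).
  assert (Hb : forall t t', Rabs t <= Rabs t' <= L -> Pb t' <= Pb t).
  { intros t t' H. unfold Pb. destruct (Rle_dec (Rabs t') s), (Rle_dec (Rabs t) s).
    - apply Hphi; lra.
    - lra.
    - apply Hphi0; auto.
    - lra. }
  assert (Hk : exists k, forall t, Rabs t <= L -> 0 <= (Om * Pb t - Ph) * (psi t - k)).
  { destruct (classic (exists t, Rabs t <= L /\ Om * Pb t < Ph)) as [[t0 Ht0]|Hn].
    - set (E := fun u => exists t, Rabs t <= L /\ Om * Pb t < Ph /\ u = psi t).
      assert (HE1 : bound E).
      { exists (psi 0). intros u [t [Ht [_ ->]]]. apply Hpsi. rewrite Rabs_R0. split; [apply Rabs_pos| auto]. }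
      destruct (completeness E HE1 (ex_intro _ (psi t0) (ex_intro _ t0 (conj (proj1 Ht0) (conj (proj2 Ht0) eq_refl))))) as [k [Hub Hlub]].
      exists k. intros t Ht. destruct (Rtotal_order (Om * Pb t) Ph) as [h|[h|h]].
      + assert (psi t <= k) by (apply Hub; exists t; auto). nra.
      + rewrite h. lra.
      + assert (k <= psi t).
        { apply Hlub. intros u [t' [Ht' [h' ->]]]. apply Hpsi. split; auto.
          destruct (Rle_lt_dec (Rabs t) (Rabs t')) as [h2|h2]; auto.
          assert (Pb t <= Pb t') by (apply Hb; lra). nra. }
        nra.
    - exists (psi L). intros t Ht.
      assert (Ph <= Om * Pb t) by (apply Rnot_lt_le; intros h; apply Hn; exists t; auto).
      assert (psi L <= psi t) by (apply Hpsi; rewrite (Rabs_right L) by lra; lra). nra. }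
  destruct Hk as [k Hk].
  assert (I1 : 0 <= RInt (fun t => Om * (psi t * phi t * w t) + (- k * Om) * (phi t * w t) + (- Ph) * (psi t * w t) + (k * Ph) * w t) (-s) s).
  { apply RInt_ge_0; [lra| |].
    - apply ex_cont. intros t. repeat apply cplus; apply cmul; auto; apply cconst.
    - intros t Ht. assert (Hk' := Hk t ltac:(apply Rabs_le; lra)). unfold Pb in Hk'.
      destruct Rle_dec as [_|h]; [|exfalso; apply h; apply Rabs_le; lra].
      pose proof (Hw t). replace (Om * (psi t * phi t * w t) + - k * Om * (phi t * w t) + - Ph * (psi t * w t) + k * Ph * w t)
        with (((Om * phi t - Ph) * (psi t - k)) * w t) by ring. apply Rmult_le_pos; auto. }
  assert (I2 : forall u v, u <= v -> (forall t, u < t < v -> s < Rabs t <= L) ->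
     0 <= RInt (fun t => 0 * (psi t * phi t * w t) + 0 * (phi t * w t) + (- Ph) * (psi t * w t) + (k * Ph) * w t) u v).
  { intros u v Huv Hin. apply RInt_ge_0; auto.
    - apply ex_cont. intros t. repeat apply cplus; apply cmul; auto; apply cconst.
    - intros t Ht. destruct (Hin t Ht) as [h1 h2]. assert (Hk' := Hk t h2). unfold Pb in Hk'.
      destruct Rle_dec as [h|_]; [lra|]. pose proof (Hw t).
      replace (0 * (psi t * phi t * w t) + 0 * (phi t * w t) + - Ph * (psi t * w t) + k * Ph * w t)
        with (((Om * 0 - Ph) * (psi t - k)) * w t) by ring. apply Rmult_le_pos; auto. }
  assert (I2a := I2 (-L) (-s) ltac:(lra) ltac:(intros t Ht; rewrite Rabs_left by lra; lra)).
  assert (I2b := I2 s L ltac:(lra) ltac:(intros t Ht; rewrite Rabs_right by lra; lra)).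
  rewrite lin4 in I1, I2a, I2b by auto.
  assert (HPs : Ps = RInt (fun t => psi t * w t) (-L) (-s) + RInt (fun t => psi t * w t) (-s) s + RInt (fun t => psi t * w t) s L).
  { unfold Ps. rewrite (RInt_ChaslesR _ (-L) (-s) s) by (apply ex_cont; auto). rewrite RInt_ChaslesR by (apply ex_cont; auto). reflexivity. }
  assert (HOm : Om = RInt w (-L) (-s) + RInt w (-s) s + RInt w s L).
  { unfold Om. rewrite (RInt_ChaslesR _ (-L) (-s) s) by (apply ex_cont; auto). rewrite RInt_ChaslesR by (apply ex_cont; auto). reflexivity. }
  fold Pi Ph in I1. 
  assert (Key : Om * Pi - Ps * Ph =
     (Om * Pi + - k * Om * Ph + - Ph * RInt (fun t => psi t * w t) (-s) s + k * Ph * RInt w (-s) s) +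
     (0 * RInt (fun t => psi t * phi t * w t) (-L) (-s) + 0 * RInt (fun t => phi t * w t) (-L) (-s) + - Ph * RInt (fun t => psi t * w t) (-L) (-s) + k * Ph * RInt w (-L) (-s)) +
     (0 * RInt (fun t => psi t * phi t * w t) s L + 0 * RInt (fun t => phi t * w t) s L + - Ph * RInt (fun t => psi t * w t) s L + k * Ph * RInt w s L)).
  { rewrite HPs. rewrite HOm. ring. }
  lra.
Qed.

Lemma cheb (w psi phi : R -> R) L s : 0 <= s <= L ->
  (forall t, continuous w t) -> (forall t, continuous psi t) -> (forall t, continuous phi t) -> (forall t, 0 <= w t) ->
  (forall t, w (- t) = w t) ->
  (forall t t', 0 <= t <= t' -> t' <= L -> psi t' <= psi t /\ psi (- t') <= psi (- t)) ->
  (forall t t', Rabs t <= Rabs t' <= s -> phi t' <= phi t) -> (forall t, Rabs t <= s -> 0 <= phi t) ->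
  RInt w (-L) L * RInt (fun t => psi t * phi t * w t) (-s) s >=
  RInt (fun t => psi t * w t) (-L) L * RInt (fun t => phi t * w t) (-s) s.
Proof.
  intros Hs Cw Cp Cf Hw Hws Hpsi Hphi Hphi0.
  set (ps := fun t => (psi t + psi (- t)) / 2).
  assert (Cps : forall t, continuous ps t).
  { intros t. unfold ps. apply (cmul (fun t => psi t + psi (- t)) (fun _ => / 2)); [|apply cconst].
    apply cplus; auto. apply copp; auto. }
  assert (Hps : forall t t', Rabs t <= Rabs t' <= L -> ps t' <= ps t).
  { assert (E : forall t, ps t = (psi (Rabs t) + psi (- Rabs t)) / 2).
    { intros t. unfold ps. destruct (Rle_lt_dec 0 t).
      - rewrite Rabs_right by lra. reflexivity.
      - rewrite Rabs_left by lra. rewrite Ropp_involutive. lra. }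
    intros t t' H. rewrite !E. destruct (Hpsi (Rabs t) (Rabs t')) as [h1 h2]; [split; [apply Rabs_pos| lra]| lra|]. lra. }
  assert (Hsym : forall t, Rabs t <= s -> phi (- t) = phi t).
  { intros t Ht. apply Rle_antisym; apply Hphi; rewrite Rabs_Ropp; lra. }
  assert (Cpfw : forall t, continuous (fun t => psi t * phi t * w t) t) by (intros; repeat apply cmul; auto).
  assert (Cpw : forall t, continuous (fun t => psi t * w t) t) by (intros; repeat apply cmul; auto).
  assert (E1 : @eq R (RInt (fun t => psi t * phi t * w t) (-s) s) (RInt (fun t => ps t * phi t * w t) (-s) s)).
  { rewrite (RInt_ext (fun t => ps t * phi t * w t)
       (fun t => / 2 * (psi t * phi t * w t) + / 2 * ((fun t => psi t * phi t * w t) (- t)) + 0 * (fun _ => 0) t + 0 * (fun _ => 0) t)).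
    - rewrite lin4; auto.
      + pose proof (refl (fun t => psi t * phi t * w t) s Cpfw) as R1. cbv beta in R1. lra.
      + intros t. apply (copp (fun t => psi t * phi t * w t)); auto.
      + intros; apply cconst.
      + intros; apply cconst.
    - intros t Ht. rewrite Rmin_left in Ht by lra. rewrite Rmax_right in Ht by lra.
      simpl. rewrite Hws, Hsym by (apply Rabs_le; lra). unfold ps. field. }
  assert (E2 : @eq R (RInt (fun t => psi t * w t) (-L) L) (RInt (fun t => ps t * w t) (-L) L)).
  { rewrite (RInt_ext (fun t => ps t * w t)
       (fun t => / 2 * (psi t * w t) + / 2 * ((fun t => psi t * w t) (- t)) + 0 * (fun _ => 0) t + 0 * (fun _ => 0) t)).
    - rewrite lin4; auto.
      + pose proof (refl (fun t => psi t * w t) L Cpw) as R1. cbv beta in R1. lra.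
      + intros t. apply (copp (fun t => psi t * w t)); auto.
      + intros; apply cconst.
      + intros; apply cconst.
    - intros t Ht. simpl. rewrite Hws. unfold ps. field. }
  rewrite E1, E2. apply cheb_sym; auto.
Qed.

Lemma c1_mono g : class_C1 g -> (forall t t', 0 <= t <= t' -> g t' <= g t) /\ (forall t t', t' <= t <= 0 -> g t' <= g t).
Proof.
  intros [_ [_ [Hpos [Hconv Hmax]]]]. split.
  - intros t t' H. apply Rnot_lt_le. intros Hl. set (c := (g t + g t') / 2).
    pose proof (Hpos t). pose proof (Hmax t').
    assert (c < g t) by (apply (Hconv c ltac:(unfold c; lra) 0 t t'); [lra| unfold c; lra| unfold c; lra]).
    unfold c in H2. lra.
  - intros t t' H. apply Rnot_lt_le. intros Hl. set (c := (g t + g t') / 2).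
    pose proof (Hpos t). pose proof (Hmax t').
    assert (c < g t) by (apply (Hconv c ltac:(unfold c; lra) t' t 0); [lra| unfold c; lra| unfold c; lra]).
    unfold c in H2. lra.
Qed.

Lemma contA_upd d F k r x t0 : contA d F -> 0 <= r -> continuous (fun t => F r (upd x k t)) t0.
Proof.
  intros HF Hr. apply cont_ed. intros eps He. destruct (HF r (upd x k t0) eps Hr He) as [dl [Hdl P]].
  exists dl. split; auto. intros y Hy. apply P; auto. rewrite Rminus_diag, Rabs_R0; auto.
  intros i Hi. unfold upd. destruct (Nat.eqb i k); auto. rewrite Rminus_diag, Rabs_R0; auto.
Qed.

Section Q.
Variables (L : R) (d : nat) (rho : nat -> R -> R) (f : (nat -> R) -> R) (c : nat -> R).
Hypothesis HL : 0 <= L.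
Hypothesis Hrho : forall i, (i < d)%nat -> pos_cont_on_halfline (rho i).
Hypothesis Hfc : continuous_Rd d f.
Hypothesis Hf0 : forall y, 0 <= f y.
Hypothesis Hf1 : forall i x, (i < d)%nat -> class_C1 (fun t => f (upd x i t)).
Hypothesis Hc : cpos d c.

Let z : nat -> R := fun _ => 0.
Let Gf k := fun y => f y * dens rho k y.
Let Wk k := prodR k (fun i => RInt (fun t => rho i (Rabs t)) (-L) L).

Lemma Hz : cpos d z.
Proof. intros i _. unfold z. lra. Qed.

Lemma cGf k : (k <= d)%nat -> continuous_Rd d (Gf k).
Proof. intros. unfold Gf. apply cd_mult; auto. apply cd_dens; auto. Qed.

Lemma cdens k : (k <= d)%nat -> continuous_Rd d (dens rho k).
Proof. intros. apply cd_dens; auto. Qed.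

Lemma dens0 k y : (k <= d)%nat -> 0 <= dens rho k y.
Proof. intros. left. apply (dens_pos d); auto. Qed.

Lemma Q : forall k, (k <= d)%nat -> forall r x,
  A L c (Gf k) k r x * A L z (dens rho k) k 1 x >= A L z (Gf k) k 1 x * A L c (dens rho k) k r x.
Proof.
  induction k as [|k IH]; intros Hk r x.
  - unfold A, Gf, dens, indE; simpl. destruct (Rle_dec 0 r); destruct (Rle_dec 0 1); try lra.
  - destruct (Rlt_le_dec r 0) as [Hr|Hr].
    { assert (cpos (S k) c) by (intros i Hi; apply Hc; lia). rewrite (A_neg L c (Gf (S k))), (A_neg L c (dens rho (S k))) by auto. right; ring. }
    assert (Hk' : (k < d)%nat) by lia.
    set (w := fun t => rho k (Rabs t)).
    set (b := fun y : nat -> R => rho k (Rabs (y k))).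
    assert (Cb : continuous_Rd d b) by (apply cd_rho; auto).
    assert (Hdep : dep_ge k b) by (intros y y' Hy; unfold b; rewrite Hy; auto).
    assert (EG : Gf (S k) = fun y => Gf k y * b y) by (apply functional_extensionality; intros y; unfold Gf, b, dens; simpl; ring).
    assert (ED : dens rho (S k) = fun y => dens rho k y * b y) by (apply functional_extensionality; intros y; unfold b, dens; simpl; ring).
    pose proof (sf_bounds L (c k) r HL) as Hs.
    set (s := sf L (c k) r) in *.
    assert (EP : A L c (Gf (S k)) (S k) r x = RInt (fun t => Hf L c (Gf k) k t r x * w t) (-s) s).
    { rewrite (repS L d) by (auto; apply cGf; auto). apply RInt_extR. intros t. unfold Hf. rewrite EG.
      rewrite (A_scal L d HL c (Gf k) b Hc) by first [apply cGf; lia | rewrite <- EG; apply cGf; lia | lia | exact Hdep].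
      unfold b, w. rewrite upd_eq. reflexivity. }
    assert (EV : A L c (dens rho (S k)) (S k) r x = RInt (fun t => Hf L c (dens rho k) k t r x * w t) (-s) s).
    { rewrite (repS L d) by (auto; apply cdens; auto). apply RInt_extR. intros t. unfold Hf. rewrite ED.
      rewrite (A_scal L d HL c (dens rho k) b Hc) by first [apply cdens; lia | rewrite <- ED; apply cdens; lia | lia | exact Hdep].
      unfold b, w. rewrite upd_eq. reflexivity. }
    assert (EB : A L z (Gf (S k)) (S k) 1 x = RInt (fun t => A L z (Gf k) k 1 (upd x k t) * w t) (-L) L).
    { rewrite (repS L d) by first [lra | apply Hz | apply cGf; auto | auto].
      unfold sf. destruct Rle_dec as [_|h]; [|exfalso; apply h; unfold z; lra].
      apply RInt_extR. intros t. unfold Hf. replace (Rmax (1 - z k * t ^ 2) 0) with 1 by (unfold z, Rmax; destruct Rle_dec; lra).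
      rewrite EG.
      rewrite (A_scal L d HL z (Gf k) b Hz) by first [apply cGf; lia | rewrite <- EG; apply cGf; lia | lia | exact Hdep].
      unfold b, w. rewrite upd_eq. reflexivity. }
    assert (EW : forall k', (k' <= d)%nat -> forall x', A L z (dens rho k') k' 1 x' = Wk k') by (intros; apply (W_prod d); auto).
    rewrite EP, EV, EB, EW by auto.
    assert (HW0 : 0 <= Wk k) by (rewrite <- (EW k ltac:(lia) x); apply (A_nonneg L d HL z); first [apply Hz | apply cdens; lia | intros; apply dens0; lia | lia]).
    assert (Cw : forall t, continuous w t) by (intros; apply rho_abs_cont; auto).
    assert (Hw : forall t, 0 <= w t) by (intros; left; apply (proj1 (Hrho k Hk')); apply Rabs_pos).
    set (p := fun t => Hf L c (Gf k) k t r x).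
    set (v := fun t => Hf L c (dens rho k) k t r x).
    set (bb := fun t => A L z (Gf k) k 1 (upd x k t)).
    assert (Cp : forall t, continuous p t) by (intros; apply (Hf_cont L d); auto; apply cGf; lia).
    assert (Cv : forall t, continuous v t) by (intros; apply (Hf_cont L d); auto; apply cdens; lia).
    assert (Cbb : forall t, continuous bb t) by (intros; apply (contA_upd d); [apply reg; first [lra | apply Hz | apply cGf; lia | lia] | lra]).
    assert (HIH : forall t, p t * Wk k >= bb t * v t).
    { intros t. unfold p, v, bb, Hf. pose proof (IH ltac:(lia) (Rmax (r - c k * t ^ 2) 0) (upd x k t)) as h.
      rewrite EW in h by lia. exact h. }
    assert (S1 : Wk k * RInt (fun t => p t * w t) (-s) s >= RInt (fun t => bb t * v t * w t) (-s) s).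
    { rewrite <- RInt_scalR by (apply ex_cont; intros; apply cmul; auto).
      apply Rle_ge. apply RInt_le; [lra| apply ex_cont; intros; repeat apply cmul; auto| apply ex_cont; intros; apply (cmul (fun _ => Wk k) (fun t => p t * w t)); [apply cconst| apply cmul; auto]|].
      intros t _. specialize (HIH t). pose proof (Hw t). nra. }
    assert (Hws : forall t, w (- t) = w t) by (intros; unfold w; rewrite Rabs_Ropp; auto).
    assert (Hcmp : forall u u', (forall y, f (upd y k u') <= f (upd y k u)) -> bb u' <= bb u).
    { intros u u' Hle. unfold bb. rewrite (A_shift L z (Gf k) k 1 x u u'). rewrite (A_shift L z (Gf k) k 1 x u u).
      apply (A_mono L d HL z); try lra; try lia; try apply Hz.
      - apply cd_upd. apply cGf; lia.
      - apply cd_upd. apply cGf; lia.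
      - intros y. unfold Gf. apply Rmult_le_pos; auto. apply dens0; lia.
      - intros y. unfold Gf.
        replace (dens rho k (upd y k u')) with (dens rho k (upd y k u)).
        + apply Rmult_le_compat_r; auto. apply dens0; lia.
        + unfold dens. apply prodR_ext. intros i Hi. rewrite !upd_neq by lia. reflexivity. }
    assert (Hbb : forall t t', 0 <= t <= t' -> t' <= L -> bb t' <= bb t /\ bb (- t') <= bb (- t)).
    { intros t t' Ht _. split; apply Hcmp; intros y; destruct (c1_mono _ (Hf1 k y Hk')) as [m1 m2].
      - apply m1; lra.
      - apply m2; lra. }
    assert (Hv : forall t t', Rabs t <= Rabs t' <= s -> v t' <= v t).
    { intros t t' Ht. unfold v, Hf. rewrite (A_indep L c (dens rho k) k _ (upd x k t') (upd x k t)).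
      - apply (A_mono L d HL c); auto; try lia.
        + apply cdens; lia.
        + apply cdens; lia.
        + intros; apply dens0; lia.
        + intros; lra.
        + assert (Hck : 0 <= c k) by (apply Hc; lia).
          assert (t ^ 2 <= t' ^ 2).
          { rewrite <- (pow2_abs t), <- (pow2_abs t'). pose proof (Rabs_pos t). nra. }
          unfold Rmax. do 2 destruct Rle_dec; nra.
      - intros y y' Hy. unfold dens. apply prodR_ext. intros i Hi. rewrite Hy; auto. }
    assert (Hv0 : forall t, Rabs t <= s -> 0 <= v t).
    { intros t _. unfold v, Hf. apply (A_nonneg L d HL c); auto; try lia. apply cdens; lia. intros; apply dens0; lia. }
    assert (S2 := cheb w bb v L s Hs Cw Cbb Cv Hw Hws Hbb Hv Hv0).
    assert (EWS : Wk (S k) = Wk k * RInt w (-L) L) by reflexivity.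
    rewrite EWS.
    assert (HO : 0 <= RInt w (-L) L) by (apply RInt_ge_0; [lra| apply ex_cont; auto| intros; auto]).
    set (Om := RInt w (-L) L) in *.
    set (IP := RInt (fun t => p t * w t) (-s) s) in *.
    set (IB := RInt (fun t => bb t * v t * w t) (-s) s) in *.
    assert (Om * (Wk k * IP) >= Om * IB) by (apply Rle_ge; apply Rmult_le_compat_l; lra).
    change (IP * (Wk k * Om) >= RInt (fun t => bb t * w t) (-L) L * RInt (fun t => v t * w t) (-s) s). nra.
Qed.
End Q.

Lemma int_Rd_const d F X M : (forall L, M <= L -> box_int L d F (fun _ => 0) = X) -> int_Rd d F = X.
Proof.
  intros H. assert (H1 : int_Rd_is d F X).
  { intros eps He. exists M. intros L HL. rewrite H by auto. rewrite Rminus_diag, Rabs_R0. lra. }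
  pose proof (epsilon_spec (inhabits 0) (int_Rd_is d F) (ex_intro _ X H1)) as H2.
  unfold int_Rd. set (I := epsilon (inhabits 0) (int_Rd_is d F)) in *.
  apply NNPP; intros Hne.
  assert (He : 0 < Rabs (I - X) / 2) by (apply Rdiv_lt_0_compat; [apply Rabs_pos_lt; intro h; apply Hne; lra| lra]).
  destruct (H2 _ He) as [M2 HM2]. specialize (HM2 (Rmax M M2) (Rmax_r _ _)).
  rewrite H in HM2 by apply Rmax_l. rewrite <- Rabs_Ropp in HM2. replace (- (X - I)) with (I - X) in HM2 by ring. lra.
Qed.

Lemma sumR_ge d g i : (forall j, (j < d)%nat -> 0 <= g j) -> (i < d)%nat -> g i <= sumR d g.
Proof.
  induction d; intros H Hi; [lia|]. simpl.
  assert (0 <= sumR d g).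
  { clear IHd Hi. induction d; simpl; [lra|]. assert (0 <= g d) by (apply H; lia).
    assert (0 <= sumR d g) by (apply IHd; intros; apply H; lia). lra. }
  destruct (Nat.eq_dec i d) as [->|hn]; [lra|].
  assert (g i <= sumR d g) by (apply IHd; [intros; apply H; lia| lia]).
  assert (0 <= g d) by (apply H; lia). lra.
Qed.

Lemma prodR_le1 d g : (forall i, (i < d)%nat -> 0 <= g i <= 1) -> 0 <= prodR d g <= 1.
Proof.
  induction d; intros H; simpl; [lra|].
  destruct (IHd ltac:(intros; apply H; lia)). destruct (H d ltac:(lia)). split; nra.
Qed.

Lemma sumR_zero d y : sumR d (fun i => 0 * y i ^ 2) = 0.
Proof. induction d; cbn [sumR]; [reflexivity| rewrite IHd; ring]. Qed.

Theorem theorem3p1 (d : nat) (rho : nat -> R -> R) (a : nat -> R)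
  (f : (nat -> R) -> R) :
  (1 <= d)%nat ->
  (forall i, (i < d)%nat -> pos_cont_on_halfline (rho i)) ->
  (forall i, (i < d)%nat -> improper_int_R (fun t => rho i (Rabs t)) 1) ->
  (forall i, (i < d)%nat -> 0 < a i) ->
  class_barCd d f ->
  int_Rd d (fun x => f x * ind_B d a x * density d rho x)
  >= int_Rd d (fun x => f x * density d rho x)
     * int_Rd d (fun x => ind_B d a x * density d rho x).
Proof.
  intros Hd Hrho Himp Ha [Hfc [[K HK] [Hf0 Hf1]]].
  set (c := fun i => / (a i ^ 2)). set (z := fun _ : nat => 0).
  set (K' := Rabs K).
  assert (HK' : forall y, (exists i, (i < d)%nat /\ K' < Rabs (y i)) -> f y = 0).
  { intros y [i [Hi Hy]]. apply HK. exists i. split; auto. unfold K' in Hy. pose proof (Rle_abs K). lra. }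
  set (L0 := K' + sumR d (fun i => Rabs (a i)) + 1).
  assert (HsumA : 0 <= sumR d (fun i => Rabs (a i))).
  { clear. induction d; simpl; [lra|]. pose proof (Rabs_pos (a d)). lra. }
  assert (HK0 : 0 <= K') by apply Rabs_pos.
  assert (HL0 : 0 <= L0) by (unfold L0; lra).
  assert (HL0K : K' <= L0) by (unfold L0; lra).
  assert (HL0a : forall i, (i < d)%nat -> a i <= L0).
  { intros i Hi. pose proof (sumR_ge d (fun i => Rabs (a i)) i ltac:(intros; apply Rabs_pos) Hi). simpl in H.
    rewrite Rabs_right in H by (left; apply Ha; auto). unfold L0. lra. }
  assert (Hcpos : forall i, (i < d)%nat -> 0 < c i).
  { intros i Hi. unfold c. apply Rinv_0_lt_compat. pose proof (Ha i Hi). nra. }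
  assert (Hc : cpos d c) by (intros i Hi; left; auto).
  assert (Hz : cpos d z) by (intros i _; unfold z; lra).
  assert (Hdens : continuous_Rd d (dens rho d)) by (apply cd_dens; auto).
  assert (HGf : continuous_Rd d (fun y => f y * dens rho d y)) by (apply cd_mult; auto).
  assert (EB : forall y, ind_B d a y = indE c 1 d y).
  { intros y. unfold ind_B, indE. replace (fun i => y i ^ 2 / a i ^ 2) with (fun i => c i * y i ^ 2); [reflexivity|].
    apply functional_extensionality; intros i. unfold c, Rdiv. ring. }
  assert (E1 : (fun x => f x * ind_B d a x * density d rho x) = (fun y => (f y * dens rho d y) * indE c 1 d y)).
  { apply functional_extensionality; intros y. rewrite EB. unfold density, dens. ring. }
  assert (E2 : (fun x => f x * density d rho x) = (fun y => (f y * dens rho d y) * indE z 1 d y)).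
  { apply functional_extensionality; intros y. unfold indE. unfold z. cbv beta. rewrite sumR_zero.
    destruct Rle_dec; [|lra]. unfold density, dens. ring. }
  assert (E3 : (fun x => ind_B d a x * density d rho x) = (fun y => dens rho d y * indE c 1 d y)).
  { apply functional_extensionality; intros y. rewrite EB. unfold density, dens. ring. }
  assert (I1 : int_Rd d (fun x => f x * ind_B d a x * density d rho x) = A L0 c (fun y => f y * dens rho d y) d 1 (fun _ => 0)).
  { apply (int_Rd_const _ _ _ L0). intros L HL. rewrite E1. fold (A L c (fun y => f y * dens rho d y) d 1 (fun _ => 0)).
    apply (const_b d L L0 c _ K'); auto; [lra| intros y Hy; rewrite HK' by auto; ring]. }
  assert (I2 : int_Rd d (fun x => f x * density d rho x) = A L0 z (fun y => f y * dens rho d y) d 1 (fun _ => 0)).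
  { apply (int_Rd_const _ _ _ L0). intros L HL. rewrite E2. fold (A L z (fun y => f y * dens rho d y) d 1 (fun _ => 0)).
    apply (const_b d L L0 z _ K'); auto; [lra| intros y Hy; rewrite HK' by auto; ring]. }
  assert (Hsq : forall i r, (i < d)%nat -> 0 <= r <= 1 -> sqrt (r / c i) <= L0).
  { intros i r Hi Hr. pose proof (Ha i Hi). pose proof (HL0a i Hi).
    replace (r / c i) with (r * a i ^ 2) by (unfold c; field; lra).
    apply Rle_trans with (sqrt (a i ^ 2)).
    - apply sqrt_le_1_alt. nra.
    - rewrite <- Rsqr_pow2. rewrite sqrt_Rsqr by lra. lra. }
  assert (I3 : int_Rd d (fun x => ind_B d a x * density d rho x) = A L0 c (dens rho d) d 1 (fun _ => 0)).
  { apply (int_Rd_const _ _ _ L0). intros L HL. rewrite E3. fold (A L c (dens rho d) d 1 (fun _ => 0)).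
    apply (const_a d L L0 c); auto; try lra. intros i r Hi Hr. split; [pose proof (Hsq i r Hi Hr); lra| auto]. }
  rewrite I1, I2, I3.
  pose proof (Q L0 d rho f c HL0 Hrho Hfc Hf0 Hf1 Hc d (Nat.le_refl d) 1 (fun _ => 0)) as HQ. simpl in HQ.
  rewrite (W_prod d L0 rho HL0 Hrho d (Nat.le_refl d)) in HQ.
  assert (HW : 0 <= prodR d (fun i => RInt (fun t => rho i (Rabs t)) (- L0) L0) <= 1).
  { apply prodR_le1. intros i Hi.
    assert (Cw : forall t, continuous (fun t => rho i (Rabs t)) t) by (intros; apply rho_abs_cont; auto).
    assert (Hw : forall t, 0 <= rho i (Rabs t)) by (intros; left; apply (proj1 (Hrho i Hi)); apply Rabs_pos).
    assert (Hmono : forall L, L0 <= L -> RInt (fun t => rho i (Rabs t)) (- L0) L0 <= RInt (fun t => rho i (Rabs t)) (- L) L).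
    { intros L HL.
      rewrite <- (RInt_ChaslesR _ (-L) (-L0) L) by (apply ex_cont; auto).
      rewrite <- (RInt_ChaslesR _ (-L0) L0 L) by (apply ex_cont; auto).
      assert (0 <= RInt (fun t => rho i (Rabs t)) (-L) (-L0)) by (apply RInt_ge_0; [lra| apply ex_cont; auto| intros; auto]).
      assert (0 <= RInt (fun t => rho i (Rabs t)) L0 L) by (apply RInt_ge_0; [lra| apply ex_cont; auto| intros; auto]).
      lra. }
    split.
    - apply RInt_ge_0; [lra| apply ex_cont; auto| intros; auto].
    - apply Rnot_lt_le. intros Hgt.
      destruct (Himp i Hi (RInt (fun t => rho i (Rabs t)) (- L0) L0 - 1) ltac:(lra)) as [M HM].
      specialize (HM (Rmax M L0) (Rmax_l _ _)).
      rewrite RI_RInt in HM by (apply ex_cont; auto).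
      pose proof (Hmono (Rmax M L0) (Rmax_r _ _)).
      rewrite Rabs_right in HM by lra. lra. }
  assert (HP0 : 0 <= A L0 c (fun y => f y * dens rho d y) d 1 (fun _ => 0)).
  { apply (A_nonneg L0 d HL0 c); auto. intros y. apply Rmult_le_pos; auto. left; apply (dens_pos d); auto. }
  unfold z. nra.
Qed.
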